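(* Let $\mathcal{T}\in\mathbb{K}^{R\times R\times K}$ be slice mix invertible, of multilinear rank $(R,R,K)$ and border $\mathbb{K}$-rank $R$. If $\mathscr{L}$ is a JGE value of $\mathcal{T}$ with $\mathrm{am}(\mathscr{L})=m\geq1$, then $\mathrm{gm}(\mathscr{L})\geq 1$.
   Context: $\mathbb{K}$ denotes $\mathbb{R}$ or $\mathbb{C}$. Multilinear rank $(R_1,R_2,R_3)$: $R_i$ is the dimension of the span of mode-$i$ fibers. Border $\mathbb{K}$-rank: least $R$ such that the tensor is a limit of tensors of $\mathbb{K}$-rank at most $R$. For $\mathcal{T}$ with slices $\mathbf{T}_k$: slice mix invertible means some linear combination of the $\mathbf{T}_k$ is invertible; $p_{\mathcal{T}}(\boldsymbol{\gamma})=\det(\sum_k\gamma_k\mathbf{T}_k)$. For nonzero $\boldsymbol{\lambda}\in\mathbb{K}^K$, $\mathrm{am}(\mathrm{span}(\boldsymbol{\lambda}))$ is the largest $m$ with $(\sum_k\lambda_k\gamma_k)^m\mid p_{\mathcal{T}}$; a nonzero $\mathbf{x}$ is a JGE vector paired with $\mathrm{span}(\boldsymbol{\lambda})$ if $\mathbf{T}_\ell\mathbf{x}=\lambda_\ell\mathbf{y}$ for all $\ell$ for some nonzero $\mathbf{y}$; $\mathrm{gm}(\mathrm{span}(\boldsymbol{\lambda}))$ is the dimension of the span of such $\mathbf{x}$. A JGE value here means a one-dimensional subspace $\mathrm{span}(\boldsymbol{\lambda})\subset\mathbb{K}^K$ with positive algebraic multiplicity. *)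

(* Defs.v *)
From HB Require Import structures.
From mathcomp Require Import all_boot all_order all_algebra.
From mathcomp Require Import mpoly.
From mathcomp Require Import complex.
From mathcomp Require Import reals.

Set Implicit Arguments.
Unset Strict Implicit.
Unset Printing Implicit Defensive.

Import Order.TTheory GRing.Theory Num.Theory.
Local Open Scope ring_scope.

(* A tensor in F^{n x n x K}, given by its frontal slices T_k (k < K);
   the entry T_{i j k} is [T k i j]. *)
Definition tensor (F : Type) (n K : nat) := 'I_K -> 'M[F]_n.

Section Defs.
Variable F : numFieldType.
Variables n K : nat.
Implicit Types (T S : tensor F n K).

Definition rank_le (r : nat) T : Prop :=
  exists (a b : 'I_r -> 'I_n -> F) (c : 'I_r -> 'I_K -> F),
    forall (i j : 'I_n) (k : 'I_K), T k i j = \sum_(l < r) a l i * b l j * c l k.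

(* T is a limit (entrywise, equivalently in any norm on the finite dimensional
   space F^{n x n x K}) of tensors of F-rank at most r *)
Definition border_rank_le (r : nat) T : Prop :=
  forall e : F, 0 < e -> exists S, rank_le r S /\
    forall (i j : 'I_n) (k : 'I_K), `|T k i j - S k i j| < e.

Definition border_rank_eq (r : nat) T : Prop :=
  border_rank_le r T /\ forall r', (r' < r)%N -> ~ border_rank_le r' T.

Definition fiber1 T (j : 'I_n) (k : 'I_K) : 'rV[F]_n := \row_i T k i j.
Definition fiber2 T (i : 'I_n) (k : 'I_K) : 'rV[F]_n := \row_j T k i j.
Definition fiber3 T (i j : 'I_n) : 'rV[F]_K := \row_k T k i j.

Definition mlrank T : nat * nat * nat :=
  (\dim <<[seq fiber1 T j k | j <- enum 'I_n, k <- enum 'I_K]>>%VS,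
   \dim <<[seq fiber2 T i k | i <- enum 'I_n, k <- enum 'I_K]>>%VS,
   \dim <<[seq fiber3 T i j | i <- enum 'I_n, j <- enum 'I_n]>>%VS).

Definition slice_mix_invertible T : Prop :=
  exists g : 'I_K -> F, (\sum_(k < K) g k *: T k) \in unitmx.

Definition pT T : {mpoly F[K]} :=
  \det (\matrix_(i, j) \sum_(k < K) (T k i j)%:MP * 'X_k).

Definition linform (lam : 'rV[F]_K) : {mpoly F[K]} :=
  \sum_(k < K) (lam 0 k)%:MP * 'X_k.

Definition mdvd (p q : {mpoly F[K]}) : Prop := exists r, q = p * r.

Definition am_eq T (lam : 'rV[F]_K) (m : nat) : Prop :=
  mdvd (linform lam ^+ m) (pT T) /\ ~ mdvd (linform lam ^+ m.+1) (pT T).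

Definition JGE_vector T (lam : 'rV[F]_K) (x : 'cV[F]_n) : Prop :=
  x != 0 /\ exists y : 'cV[F]_n, y != 0 /\
    forall l : 'I_K, T l *m x = lam 0 l *: y.

(* gm(span lam) >= d : the span of the JGE vectors has dimension >= d, i.e.
   there are d linearly independent JGE vectors (the columns of X). *)
Definition gm_ge T (lam : 'rV[F]_K) (d : nat) : Prop :=
  exists X : 'M[F]_(n, d), row_free X^T /\
    forall c : 'I_d, JGE_vector T lam (col c X).

Definition lemma3p4_stmt : Prop :=
  forall T : tensor F n K,
    slice_mix_invertible T ->
    mlrank T = (n, n, K) ->
    border_rank_eq n T ->
    forall (lam : 'rV[F]_K), lam != 0 ->
    forall m : nat, (1 <= m)%N -> am_eq T lam m ->
    gm_ge T lam 1.

End Defs.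

(* Main.v *)
Require Import Defs.
From HB Require Import structures.
From mathcomp Require Import all_boot all_order all_algebra.
From mathcomp Require Import mpoly complex reals.
From mathcomp Require Import ring fingroup perm.
Set Implicit Arguments.
Unset Strict Implicit.
Unset Printing Implicit Defensive.
Import Order.TTheory GRing.Theory Num.Theory.
Local Open Scope ring_scope.

Section Lip.
Variable F : numFieldType.
Variables n K : nat.
Variable T : tensor F n K.

Definition close (d : F) (S : tensor F n K) := forall i j k, `|T k i j - S k i j| <= d.
Definition lip (f : tensor F n K -> F) :=
  exists C, 0 <= C /\ forall d S, 0 < d -> d <= 1 -> close d S -> `|f T - f S| <= C * d.

Lemma lip_ext f g : (forall S, f S = g S) -> lip f -> lip g.
Proof. by move=> e [C [C0 h]]; exists C; split=> // d S d0 d1 hS; rewrite -!e; exact: h. Qed.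

Lemma lip_cst c : lip (fun _ => c).
Proof. by exists 0; split => // d S _ _ _; rewrite subrr normr0 mul0r. Qed.

Lemma lip_proj i j k : lip (fun S => S k i j).
Proof. by exists 1; split => // d S _ _ h; rewrite mul1r. Qed.

Lemma lip_add f g : lip f -> lip g -> lip (fun S => f S + g S).
Proof.
move=> [Cf [Cf0 hf]] [Cg [Cg0 hg]]; exists (Cf + Cg); split; first exact: addr_ge0.
move=> d S d0 d1 hS.
have -> : f T + g T - (f S + g S) = (f T - f S) + (g T - g S) by rewrite opprD addrACA.
rewrite mulrDl; apply: le_trans (ler_normD _ _) _; apply: lerD; [exact: hf|exact: hg].
Qed.

Lemma lip_opp f : lip f -> lip (fun S => - f S).
Proof.
move=> [C [C0 h]]; exists C; split => // d S d0 d1 hS.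
by rewrite -opprD normrN; apply: h.
Qed.

Lemma lip_mul f g : lip f -> lip g -> lip (fun S => f S * g S).
Proof.
move=> [Cf [Cf0 hf]] [Cg [Cg0 hg]].
exists (`|f T| * Cg + Cf * (`|g T| + Cg)); split.
  by rewrite addr_ge0 // mulr_ge0 // addr_ge0.
move=> d S d0 d1 hS.
have -> : f T * g T - f S * g S = f T * (g T - g S) + (f T - f S) * g S.
  by rewrite mulrBr mulrBl addrA subrK.
apply: le_trans (ler_normD _ _) _; rewrite [X in _ <= X]mulrDl; apply: lerD; rewrite normrM.
  by rewrite -mulrA ler_wpM2l // hg.
have hgS : `|g S| <= `|g T| + Cg.
  have -> : g S = g T - (g T - g S) by rewrite opprB addrC subrK.
  apply: le_trans (ler_normB _ _) _; apply: lerD => //.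
  apply: le_trans (hg _ _ d0 d1 hS) _.
  by rewrite ler_piMr.
rewrite mulrAC; apply: ler_pM => //; first exact: hf.
Qed.

Lemma lip_sum (I : Type) (r : seq I) (P : pred I) (f : I -> tensor F n K -> F) :
  (forall i, lip (f i)) -> lip (fun S => \sum_(i <- r | P i) f i S).
Proof.
move=> hf; elim: r => [|i r IH].
  by apply: lip_ext (lip_cst 0) => S; rewrite big_nil.
case Pi: (P i).
  by apply: lip_ext (lip_add (hf i) IH) => S; rewrite big_cons Pi.
by apply: lip_ext IH => S; rewrite big_cons Pi.
Qed.

Lemma lip_prod (I : Type) (r : seq I) (P : pred I) (f : I -> tensor F n K -> F) :
  (forall i, lip (f i)) -> lip (fun S => \prod_(i <- r | P i) f i S).
Proof.
move=> hf; elim: r => [|i r IH].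
  by apply: lip_ext (lip_cst 1) => S; rewrite big_nil.
case Pi: (P i).
  by apply: lip_ext (lip_mul (hf i) IH) => S; rewrite big_cons Pi.
by apply: lip_ext IH => S; rewrite big_cons Pi.
Qed.

Definition lipM m p (Phi : tensor F n K -> 'M[F]_(m, p)) :=
  forall i j, lip (fun S => Phi S i j).

Lemma lipM_mul m p q (Phi : tensor F n K -> 'M[F]_(m, p)) (Psi : tensor F n K -> 'M[F]_(p, q)) :
  lipM Phi -> lipM Psi -> lipM (fun S => Phi S *m Psi S).
Proof.
move=> h1 h2 i j.
apply: (@lip_ext (fun S => \sum_k Phi S i k * Psi S k j)) => [S|]; first by rewrite mxE.
by apply: lip_sum => k; apply: lip_mul.
Qed.

Lemma lip_det m (Phi : tensor F n K -> 'M[F]_m) : lipM Phi -> lip (fun S => \det (Phi S)).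
Proof.
move=> h.
apply: (@lip_ext (fun S => \sum_(s : 'S_m) (-1) ^+ s * \prod_i Phi S i (s i))) => [S|] //.
apply: lip_sum => s; apply: lip_mul; first exact: lip_cst.
by apply: lip_prod => i; apply: h.
Qed.

Lemma lip_adj m (Phi : tensor F n K -> 'M[F]_m) : lipM Phi -> lipM (fun S => \adj (Phi S)).
Proof.
move=> h i j.
apply: (@lip_ext (fun S => (-1) ^+ (j + i) * \det (row' j (col' i (Phi S))))) => [S|].
  by rewrite mxE.
apply: lip_mul; first exact: lip_cst.
apply: lip_det => a b.
apply: (@lip_ext (fun S => Phi S (lift j a) (lift i b))) => [S|]; first by rewrite !mxE.
exact: h.
Qed.

Lemma lipM_slice k : lipM (fun S : tensor F n K => S k).
Proof. by move=> i j; apply: lip_proj. Qed.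

Lemma lipM_comb (g : 'I_K -> F) : lipM (fun S : tensor F n K => \sum_k g k *: S k).
Proof.
move=> i j.
apply: (@lip_ext (fun S => \sum_k g k * S k i j)) => [S|].
  by rewrite summxE; apply: eq_bigr => k _; rewrite mxE.
by apply: lip_sum => k; apply: lip_mul; [exact: lip_cst|exact: lip_proj].
Qed.

Lemma small_delta (b C z : F) : 0 < b -> 0 <= C -> 0 < z ->
  exists d, [/\ 0 < d, d <= b & C * d < z].
Proof.
move=> b0 C0 z0.
have D0 : 0 < C * b + z by rewrite ltr_wpDl // mulr_ge0 // ltW.
exists (b * z / (C * b + z)); split.
- by rewrite divr_gt0 // mulr_gt0.
- rewrite ler_pdivrMr // ler_wpM2l //; first exact: ltW.
  by rewrite lerDr mulr_ge0 // ltW.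
- rewrite mulrA ltr_pdivrMr //.
  have -> : C * (b * z) = z * (C * b) by rewrite mulrA mulrC.
  by rewrite mulrDr ltrDl mulr_gt0.
Qed.

Lemma border_zero (phi psi : tensor F n K -> F) :
  lip phi -> lip psi -> psi T != 0 -> border_rank_le n T ->
  (forall S, rank_le n S -> psi S != 0 -> phi S = 0) -> phi T = 0.
Proof.
move=> [Cf [Cf0 hf]] [Cg [Cg0 hg]] psi0 hb hS.
apply/eqP; apply/negP => /negP phi0.
have x0 : 0 < `|psi T| by rewrite normr_gt0.
have y0 : 0 < `|phi T| by rewrite normr_gt0.
have [d1 [d10 d11 hd1]] := small_delta ltr01 Cg0 x0.
have [d [d0 dd1 hd]] := small_delta d10 Cf0 y0.
have d1' : d <= 1 := le_trans dd1 d11.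
have [S [rS hTS]] := hb d d0.
have cS : close d S by move=> i j k; apply: ltW.
have psiS : psi S != 0.
  apply/eqP => e; have := hg d S d0 d1' cS; rewrite e subr0 => h.
  have : Cg * d <= Cg * d1 by rewrite ler_wpM2l.
  move=> h2; have := le_lt_trans (le_trans h h2) hd1.
  by rewrite ltxx.
have := hf d S d0 d1' cS; rewrite (hS S rS psiS) subr0 => h.
by have := le_lt_trans h hd; rewrite ltxx.
Qed.

End Lip.

Section Comm.
Variable F : numFieldType.
Variables n K : nat.

Lemma adj_inv (A : 'M[F]_n) : A \in unitmx -> \adj A = \det A *: invmx A.
Proof.
move=> hA; rewrite /invmx hA scalerA mulfV ?scale1r //.
by move: hA; rewrite unitmxE unitfE.
Qed.

Lemma inv_comm (A C : 'M[F]_n) : A \in unitmx -> A *m C = C *m A ->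
  invmx A *m C = C *m invmx A.
Proof.
move=> Au hAC.
have -> : invmx A *m C = invmx A *m (C *m A) *m invmx A by rewrite -mulmxA (mulmxK Au).
by rewrite -hAC !mulmxA (mulVmx Au) mul1mx.
Qed.

Lemma inv_prod3 (U D B : 'M[F]_n) : U \in unitmx -> D \in unitmx -> B \in unitmx ->
  invmx (U *m D *m B) = invmx B *m invmx D *m invmx U.
Proof.
move=> Uu Du Bu.
set X := U *m D *m B; set Y := invmx B *m invmx D *m invmx U.
have XY : X *m Y = 1%:M.
  by rewrite /X /Y !mulmxA (mulmxK Bu) (mulmxK Du) (mulmxV Uu).
have [Xu _] := mulmx1_unit XY.
by rewrite -[invmx X]mulmx1 -XY mulmxA (mulVmx Xu) mul1mx.
Qed.

Lemma diag_comm (d1 d2 : 'rV[F]_n) : diag_mx d1 *m diag_mx d2 = diag_mx d2 *m diag_mx d1.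
Proof.
apply/matrixP => i j; rewrite mul_diag_mx mul_mx_diag !mxE.
by case: eqP => [->|_]; rewrite ?mulr1n ?mulr0n ?mulr0 ?mul0r // mulrC.
Qed.

Lemma rank_comm (S : tensor F n K) (g : 'I_K -> F) k l :
  rank_le n S -> \det (\sum_k g k *: S k) != 0 ->
  S k *m \adj (\sum_k g k *: S k) *m S l = S l *m \adj (\sum_k g k *: S k) *m S k.
Proof.
move=> [a [b [c hS]]] hdet.
set U : 'M[F]_n := \matrix_(i, l) a l i.
set B : 'M[F]_n := \matrix_(l, j) b l j.
have fact : forall h : 'I_n -> F, forall i j,
    (U *m diag_mx (\row_l h l) *m B) i j = \sum_l a l i * b l j * h l.
  move=> h i j; rewrite mul_mx_diag !mxE; apply: eq_bigr => q _; rewrite !mxE; ring.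
set Dk := fun k => diag_mx (\row_l c l k).
have eS : forall k, S k = U *m Dk k *m B.
  by move=> k'; apply/matrixP => i j; rewrite hS fact.
set D := diag_mx (\row_l \sum_k g k * c l k).
have eSg : \sum_k g k *: S k = U *m D *m B.
  apply/matrixP => i j; rewrite fact summxE.
  under eq_bigr => k' _ do rewrite mxE hS mulr_sumr.
  rewrite exchange_big /=; apply: eq_bigr => q _; rewrite mulr_sumr.
  by apply: eq_bigr => k' _; ring.
rewrite eSg in hdet *.
have hu : U *m D *m B \in unitmx by rewrite unitmxE unitfE.
have Uu : U \in unitmx by move: hu; rewrite !unitmx_mul => /andP [/andP []].
have Du : D \in unitmx by move: hu; rewrite !unitmx_mul => /andP [/andP []].
have Bu : B \in unitmx by move: hu; rewrite !unitmx_mul => /andP [/andP []].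
rewrite (adj_inv hu) inv_prod3 // !eS.
rewrite -!scalemxAr -!scalemxAl; congr (_ *: _).
rewrite !mulmxA (mulmxK Bu) (mulmxKV Uu) (mulmxK Bu) (mulmxKV Uu).
have E : Dk k *m invmx D *m Dk l = Dk l *m invmx D *m Dk k.
  have c1 : invmx D *m Dk l = Dk l *m invmx D := inv_comm Du (diag_comm _ _).
  have c2 : invmx D *m Dk k = Dk k *m invmx D := inv_comm Du (diag_comm _ _).
  have c3 : Dk k *m Dk l = Dk l *m Dk k := diag_comm _ _.
  by rewrite -mulmxA c1 mulmxA c3 -mulmxA -c2 mulmxA.
have -> : U *m Dk k *m invmx D *m Dk l *m B = U *m (Dk k *m invmx D *m Dk l) *m B.
  by rewrite !mulmxA.
by rewrite E !mulmxA.
Qed.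

Lemma border_comm (T : tensor F n K) (g : 'I_K -> F) k l :
  border_rank_le n T -> (\sum_k g k *: T k) \in unitmx ->
  T k *m invmx (\sum_k g k *: T k) *m T l = T l *m invmx (\sum_k g k *: T k) *m T k.
Proof.
move=> hb hu.
have hdet : \det (\sum_k g k *: T k) != 0 by rewrite -unitfE -unitmxE.
suff : T k *m \adj (\sum_k g k *: T k) *m T l = T l *m \adj (\sum_k g k *: T k) *m T k.
  rewrite (adj_inv hu) -!scalemxAr -!scalemxAl => /eqP.
  by rewrite -subr_eq0 -scalerBr scaler_eq0 (negbTE hdet) /= subr_eq0 => /eqP.
apply/matrixP => i j; apply/eqP; rewrite -subr_eq0; apply/eqP.
pose phi := fun S : tensor F n K =>
  (S k *m \adj (\sum_k g k *: S k) *m S l) i j - (S l *m \adj (\sum_k g k *: S k) *m S k) i j.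
pose psi := fun S : tensor F n K => \det (\sum_k g k *: S k).
have := @border_zero F n K T phi psi.
apply => //.
- apply: lip_add; last apply: lip_opp;
  apply: lipM_mul; try apply: lipM_mul; try apply: lipM_slice; apply: lip_adj; apply: lipM_comb.
- by apply: lip_det; apply: lipM_comb.
- move=> S rS hS; rewrite /phi (rank_comm k l rS hS); exact: subrr.
Qed.

End Comm.

From Stdlib Require Import Classical FunctionalExtensionality.

Section CK.
Variable F : numClosedFieldType.

Lemma eig_in n (A : 'M[F]_n.+1) (P : 'rV[F]_n.+1 -> Prop) :
  (forall x y, P x -> P y -> P (x + y)) -> (forall a x, P x -> P (a *: x)) ->
  (forall x, P x -> P (x *m A)) ->
  forall v, P v -> v != 0 -> exists a w, [/\ P w, w != 0 & w *m A = a *: w].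
Proof.
move=> hD hZ hA v Pv v0.
have [rs hrs] := closed_field_poly_normal (char_poly A).
have : v *m \prod_(z <- rs) (A - z%:M) = 0.
  have := Cayley_Hamilton A.
  rewrite hrs (monicP (char_poly_monic A)) scale1r rmorph_prod /=.
  under eq_bigr => z _ do rewrite rmorphB /= horner_mx_X horner_mx_C.
  by move=> ->; rewrite mulmx0.
elim: rs v Pv v0 {hrs} => [|z rs IH] v Pv v0.
  by rewrite big_nil mulmx1 => e; rewrite e eqxx in v0.
rewrite big_cons -mulmxE mulmxA.
case: (eqVneq (v *m (A - z%:M)) 0) => [e|ne].
  move=> _; exists z, v; split => //.
  by move/eqP: e; rewrite mulmxBr mul_mx_scalar subr_eq0 => /eqP.
apply: IH => //.
rewrite mulmxBr mul_mx_scalar -scaleNr.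
by apply: hD; [apply: hA | apply: hZ].
Qed.

Lemma common_eig n (Ns : seq 'M[F]_n.+1) :
  {in Ns &, forall A B, A *m B = B *m A} ->
  forall (P : 'rV[F]_n.+1 -> Prop),
  (forall x y, P x -> P y -> P (x + y)) -> (forall a x, P x -> P (a *: x)) ->
  (forall A x, A \in Ns -> P x -> P (x *m A)) ->
  forall v, P v -> v != 0 ->
  exists w, [/\ P w, w != 0 & forall A, A \in Ns -> exists a, w *m A = a *: w].
Proof.
elim: Ns => [|A Ns IH] hc P hD hZ hA v Pv v0.
  by exists v; split.
have [a [w [Pw w0 wA]]] := eig_in hD hZ (fun x => hA A x (mem_head _ _)) Pv v0.
pose P' := fun x => P x /\ x *m A = a *: x.
have hc' : {in Ns &, forall A B, A *m B = B *m A}.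
  by move=> X Y hX hY; apply: hc; rewrite inE ?hX ?hY orbT.
have [|||||w' [[Pw' w'A] w'0 hw']] := IH hc' P' _ _ _ w.
- move=> x y [Px xA] [Py yA]; split; first exact: hD.
  by rewrite mulmxDl xA yA scalerDr.
- move=> b x [Px xA]; split; first exact: hZ.
  by rewrite -scalemxAl xA !scalerA mulrC.
- move=> X x hX [Px xA]; split; first by apply: hA => //; rewrite inE hX orbT.
  rewrite -mulmxA (hc X A) ?inE ?hX ?eqxx ?orbT // mulmxA xA.
  by rewrite -scalemxAl.
- by split.
- exact: w0.
- exists w'; split => // X; rewrite inE => /orP [/eqP ->|hX]; last exact: hw'.
  by exists a.
Qed.

Definition Pc p (c : 'I_p -> F) : {poly F} := \sum_j c j *: 'X^j.

Lemma Pc_coef p (c : 'I_p -> F) (j : 'I_p) : (Pc c)`_j = c j.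
Proof.
rewrite /Pc coef_sum (bigD1 j) //= coefZ coefXn eqxx mulr1 big1 ?addr0 //.
move=> i hi; rewrite coefZ coefXn.
by case: eqP => [/val_inj e|]; [rewrite e eqxx in hi | rewrite mulr0].
Qed.

Lemma Pc_horner p (c : 'I_p -> F) x : (Pc c).[x] = \sum_j c j * x ^+ j.
Proof.
by rewrite /Pc horner_sum; apply: eq_bigr => j _; rewrite hornerZ hornerXn.
Qed.

Lemma CK n p (N : 'I_p -> 'M[F]_n) : (forall i j, N i *m N j = N j *m N i) ->
  (forall s : nat, \det (\sum_(j < p) (s%:R ^+ j) *: N j) = 0) ->
  exists2 x : 'rV_n, x != 0 & forall j, x *m N j = 0.
Proof.
case: n N => [|n] N hc hdet.
  by have := hdet 0%N; rewrite det_mx00 => /eqP; rewrite oner_eq0.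
case: (classic (exists2 x : 'rV_n.+1, x != 0 & forall j, x *m N j = 0)) => // hno.
exfalso.
pose rs j := sval (closed_field_poly_normal (char_poly (N j))).
have hrs j : char_poly (N j) = \prod_(z <- rs j) ('X - z%:P).
  rewrite /rs; case: closed_field_poly_normal => r /= e.
  by rewrite {1}e (monicP (char_poly_monic _)) scale1r.
have szrs j : size (rs j) = n.+1.
  have := size_char_poly (N j); rewrite hrs size_prod_XsubC.
  by case.
have claim : forall s : nat, exists c : 'I_p -> F,
    [/\ forall j, c j \in rs j, [exists j, c j != 0] & \sum_(j < p) c j * (s%:R ^+ j) = 0].
  move=> s.
  set A := \sum_(j < p) (s%:R ^+ j) *: N j.
  have /det0P [v v0 vA] : \det A == 0 by rewrite hdet.
  have hcA : forall j, A *m N j = N j *m A.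
    move=> j; rewrite /A mulmx_suml mulmx_sumr; apply: eq_bigr => i _.
    by rewrite -scalemxAl -scalemxAr hc.
  have [||||w [wA w0 hw]] := @common_eig n [seq N j | j <- enum 'I_p] _
      (fun x => x *m A = 0) _ _ _ v vA v0.
  - move=> X Y /mapP [i _ ->] /mapP [j _ ->]; exact: hc.
  - by move=> x y /= hx hy; rewrite mulmxDl hx hy addr0.
  - by move=> a x /= hx; rewrite -scalemxAl hx scaler0.
  - move=> X x /mapP [j _ ->] /= hx.
    by rewrite -mulmxA -hcA mulmxA hx mul0mx.
  have : forall j, exists a, w *m N j = a *: w.
    by move=> j; apply: hw; apply: map_f; rewrite mem_enum.
  move=> /fin_all_exists [c hcw].
  exists c; split.
  - move=> j; rewrite -root_prod_XsubC -hrs -eigenvalue_root_char.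
    by apply/eigenvalueP; exists w.
  - case: (boolP [exists j, c j != 0]) => // /existsPn h.
    exfalso; apply: hno; exists w => // j.
    by rewrite hcw; move: (h j); rewrite negbK => /eqP ->; rewrite scale0r.
  - move: wA; rewrite /A mulmx_sumr.
    under eq_bigr => j _ do rewrite -scalemxAr hcw scalerA.
    rewrite -scaler_suml => /eqP; rewrite scaler_eq0 (negbTE w0) orbF => /eqP e.
    by apply: (etrans _ e); apply: eq_bigr => j _; rewrite mulrC.
pose cf (f : {ffun 'I_p -> 'I_n.+1}) j := nth 0 (rs j) (f j).
pose Q := \prod_(f : {ffun 'I_p -> 'I_n.+1} | [exists j, cf f j != 0]) Pc (cf f).
have Q0 : Q != 0.
  apply/prodf_neq0 => f /existsP [j hj].
  by apply/eqP => e; move: hj; rewrite -Pc_coef e coef0 eqxx.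
have Qroot : forall s : nat, root Q s%:R.
  move=> s; have [c [crs cnz csum]] := claim s.
  have hlt : forall j, (index (c j) (rs j) < n.+1)%N.
    by move=> j; rewrite -(szrs j) index_mem.
  pose f := [ffun j => Ordinal (hlt j)].
  have ecf : cf f = c.
    by apply: functional_extensionality => j; rewrite /cf ffunE /= nth_index.
  apply/rootP; rewrite /Q horner_prod (bigD1 f) /=; last by rewrite ecf.
  by rewrite ecf Pc_horner csum mul0r.
have hall : all (root Q) [seq i%:R | i <- iota 0 (size Q)].
  by apply/allP => x /mapP [i _ ->]; apply: Qroot.
have huniq : uniq [seq i%:R : F | i <- iota 0 (size Q)].
  rewrite map_inj_uniq ?iota_uniq //.
  by move=> a b /eqP; rewrite eqr_nat => /eqP.
have := max_poly_roots Q0 hall huniq.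
by rewrite size_map size_iota ltnn.
Qed.

End CK.

Section Eval.
Variable F : numFieldType.
Variables n K : nat.

Lemma pT_eval (T : tensor F n K) (gam : 'I_K -> F) :
  (pT T).@[gam] = \det (\sum_k gam k *: T k).
Proof.
rewrite /pT -det_map_mx; congr (determinant _); apply/matrixP => i j.
rewrite !mxE summxE raddf_sum; apply: eq_bigr => k _.
transitivity (meval gam ((T k i j)%:MP * 'X_k)); first by [].
by rewrite mevalM mevalC mevalXU !mxE mulrC.
Qed.

Lemma linform_eval (lam : 'rV[F]_K) gam :
  (linform lam).@[gam] = \sum_k lam 0 k * gam k.
Proof.
rewrite /linform raddf_sum; apply: eq_bigr => k _.
transitivity (meval gam ((lam 0 k)%:MP * 'X_k)); first by [].
by rewrite mevalM mevalC mevalXU.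
Qed.

Lemma am_zero (T : tensor F n K) lam m : am_eq T lam m -> (1 <= m)%N ->
  forall gam : 'I_K -> F, \sum_k lam 0 k * gam k = 0 -> \det (\sum_k gam k *: T k) = 0.
Proof.
move=> [[r e] _] m1 gam h.
rewrite -pT_eval e mevalM rmorphXn /= linform_eval h expr0n.
by case: m m1 {e} => //= m _; rewrite mul0r.
Qed.

End Eval.

Lemma sw4 (V : zmodType) (x y z w : V) : x - y - (z - w) = x - z - (y - w).
Proof. by rewrite -!addrA -!opprD addrCA. Qed.

Section Main.
Variable F : numFieldType.

Lemma comm_lin n (A B C D : 'M[F]_n) a b c d :
  A *m C = C *m A -> A *m D = D *m A -> B *m C = C *m B -> B *m D = D *m B ->
  (a *: A - b *: B) *m (c *: C - d *: D) = (c *: C - d *: D) *m (a *: A - b *: B).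
Proof.
move=> hAC hAD hBC hBD.
rewrite !mulmxBl !mulmxBr -!scalemxAl -!scalemxAr !scalerA hAC hAD hBC hBD.
by rewrite (mulrC a c) (mulrC a d) (mulrC b c) (mulrC b d) sw4.
Qed.

Definition CKprop := forall n p (N : 'I_p -> 'M[F]_n),
  (forall i j, N i *m N j = N j *m N i) ->
  (forall s : nat, \det (\sum_(j < p) (s%:R ^+ j) *: N j) = 0) ->
  exists2 x : 'rV_n, x != 0 & forall j, x *m N j = 0.

Lemma main : CKprop -> forall n K, lemma3p4_stmt F n K.
Proof.
move=> ck n K T [g hu] _ [hb _] lam lam0 m m1 ham.
have hcomm := fun k l => border_comm k l hb hu.
set Tg := \sum_k g k *: T k in hu hcomm.
have [k0 hk0] : exists k0, lam 0 k0 != 0.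
  case: (pickP (fun k => lam 0 k != 0)) => [k0 h|h]; first by exists k0.
  exfalso; move/eqP: lam0; apply; apply/matrixP => i k; rewrite ord1 mxE.
  by move: (h k) => /negbFE/eqP.
pose P k := invmx Tg *m T k.
have Pc : forall k l, P k *m P l = P l *m P k.
  by move=> k l; rewrite /P -!mulmxA !(mulmxA (T _)) hcomm.
pose M j := lam 0 k0 *: P j - lam 0 j *: P k0.
have Mc : forall i j, M i *m M j = M j *m M i.
  by move=> i j; apply: comm_lin; apply: Pc.
pose N j := (M j)^T.
have Nc : forall i j, N i *m N j = N j *m N i.
  by move=> i j; rewrite /N -!trmx_mul Mc.
have Nd : forall s : nat, \det (\sum_(j < K) (s%:R ^+ j) *: N j) = 0.
  move=> s.
  pose sig := \sum_(i < K) s%:R ^+ i * lam 0 i.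
  pose gam (j : 'I_K) := lam 0 k0 * s%:R ^+ j - (j == k0)%:R * sig.
  have hl : \sum_k lam 0 k * gam k = 0.
    rewrite /gam; under eq_bigr => k _ do rewrite mulrBr.
    rewrite sumrB [X in _ - X](bigD1 k0) //= eqxx mul1r [X in _ - (_ + X)]big1 ?addr0; last first.
      by move=> k /negbTE ->; rewrite mul0r mulr0.
    rewrite /sig mulr_sumr; apply/eqP; rewrite subr_eq0; apply/eqP.
    by apply: eq_bigr => k _; rewrite mulrCA [lam 0 k * _]mulrC.
  have hd0 := am_zero ham m1 hl.
  have e1 : \sum_(j < K) (s%:R ^+ j) *: N j = (\sum_(j < K) (s%:R ^+ j) *: M j)^T.
    by apply/matrixP => a b; rewrite !mxE !summxE; apply: eq_bigr => j _; rewrite !mxE.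
  have e2 : \sum_(j < K) (s%:R ^+ j) *: M j = invmx Tg *m \sum_k gam k *: T k.
    rewrite /gam; under [in RHS]eq_bigr => k _ do rewrite scalerBl.
    rewrite sumrB mulmxBr /M.
    under eq_bigr => j _ do rewrite scalerBr.
    rewrite sumrB; congr (_ - _).
      rewrite mulmx_sumr; apply: eq_bigr => j _.
      by rewrite /P !scalerA -scalemxAr mulrC.
    rewrite [in RHS](bigD1 k0) //= eqxx mul1r [X in _ + X]big1 ?addr0; last first.
      by move=> k /negbTE ->; rewrite mul0r scale0r.
    rewrite -scalemxAr /sig scaler_suml; apply: eq_bigr => j _.
    by rewrite /P scalerA.
  by rewrite e1 det_tr e2 det_mulmx hd0 mulr0.
have [x' x'0 hx'] := ck _ _ N Nc Nd.
set x := x'^T.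
have hM : forall j, M j *m x = 0.
  move=> j; have := congr1 trmx (hx' j).
  by rewrite trmx_mul trmxK trmx0.
have hY : forall j, lam 0 k0 *: (T j *m x) = lam 0 j *: (T k0 *m x).
  move=> j; have := congr1 (mulmx Tg) (hM j).
  rewrite /M /P mulmx0 mulmxBl !mulmxBr -!scalemxAl -!scalemxAr !mulmxA (mulmxV hu) !mul1mx.
  by move/eqP; rewrite subr_eq0 => /eqP.
set y := (lam 0 k0)^-1 *: (T k0 *m x).
have hTj : forall j, T j *m x = lam 0 j *: y.
  by move=> j; rewrite /y scalerA mulrC -scalerA -hY scalerA mulVf // scale1r.
have x0 : x != 0 by rewrite trmx_eq0.
have y0 : y != 0.
  apply/eqP => y0.
  have hTg : Tg *m x = 0.
    rewrite /Tg mulmx_suml big1 // => k _.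
    by rewrite -scalemxAl hTj y0 !scaler0.
  have := mulKmx hu x; rewrite hTg mulmx0 => e.
  by rewrite -e eqxx in x0.
exists x; split.
  by rewrite /row_free /x trmxK rank_rV x'0.
move=> c; rewrite col_id; split => //.
by exists y; split.
Qed.

End Main.

Section Real.
Variable R : realType.

Lemma ReD (x y : R[i]) : complex.Re (x + y) = complex.Re x + complex.Re y.
Proof. by case: x => a b; case: y. Qed.
Lemma ImD (x y : R[i]) : complex.Im (x + y) = complex.Im x + complex.Im y.
Proof. by case: x => a b; case: y. Qed.
Lemma ReMr (z : R[i]) (r : R) : complex.Re (z * real_complex R r) = complex.Re z * r.
Proof. by case: z => a b /=; rewrite mulr0 subr0. Qed.
Lemma ImMr (z : R[i]) (r : R) : complex.Im (z * real_complex R r) = complex.Im z * r.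
Proof. by case: z => a b /=; rewrite mulr0 add0r. Qed.

Lemma CK_real : CKprop R.
Proof.
move=> n p N hc hd.
pose Nc j := map_mx (real_complex R) (N j).
have [||x x0 hx] := @CK (R[i]) n p Nc _ _.
- by move=> i j; rewrite /Nc -!map_mxM hc.
- move=> s.
  have -> : \sum_(j < p) (s%:R ^+ j) *: Nc j = map_mx (real_complex R) (\sum_(j < p) (s%:R ^+ j) *: N j).
    apply/matrixP => a b; rewrite !mxE !summxE rmorph_sum; apply: eq_bigr => j _.
    by rewrite !mxE rmorphM rmorphXn rmorph_nat.
  by rewrite det_map_mx hd rmorph0.
pose u := map_mx (@complex.Re R) x.
pose v := map_mx (@complex.Im R) x.
have hu : forall j, u *m N j = 0.
  move=> j; apply/matrixP => a b; have := congr1 (fun M : 'M[R[i]]_(1, n) => M a b) (hx j).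
  rewrite !mxE => /(congr1 (@complex.Re R)); rewrite (big_morph _ ReD (erefl (complex.Re 0))) => e.
  rewrite -[RHS]e; apply: eq_bigr => i _; rewrite !mxE.
  by rewrite ReMr.
have hv : forall j, v *m N j = 0.
  move=> j; apply/matrixP => a b; have := congr1 (fun M : 'M[R[i]]_(1, n) => M a b) (hx j).
  rewrite !mxE => /(congr1 (@complex.Im R)); rewrite (big_morph _ ImD (erefl (complex.Im 0))) => e.
  rewrite -[RHS]e; apply: eq_bigr => i _; rewrite !mxE.
  by rewrite ImMr.
case: (eqVneq u 0) => [u0|]; last by exists u.
case: (eqVneq v 0) => [v0|]; last by exists v.
exfalso; move/eqP: x0; apply; apply/matrixP => a b.
have := congr1 (fun M : 'M[R]_(1, n) => M a b) u0; have := congr1 (fun M : 'M[R]_(1, n) => M a b) v0.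
rewrite !mxE; case: (x a b) => re im /= -> ->; by [].
Qed.

End Real.

Theorem lemma3p4 :
  (forall (R : realType) (n K : nat), lemma3p4_stmt R n K) /\
  (forall (R : realType) (n K : nat), lemma3p4_stmt (R[i])%C n K).
Proof.
split => R n K; apply: main.
  exact: CK_real.
exact: (@CK (R[i])).
Qed.
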